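(* Let $X$ be a Tychonoff space and let $\upsilon$ be a finite-component cover of $X$. Then the family $$\exp_\beta\upsilon=\{O\langle U_1,\dots,U_n\rangle\cap\exp_\beta X:\ U_i\in\upsilon,\ i=1,\dots,n;\ n\in\mathbb N\}$$ is a finite-component cover of the space $\exp_\beta X$.
   Context: All spaces are $T_1$. A collection $\omega$ of subsets of a set is star-finite if each element of $\omega$ meets only finitely many elements of $\omega$. A finite sequence $M_0,\dots,M_s$ of sets is a chain connecting $M_0$ and $M_s$ if $M_{i-1}\cap M_i\neq\varnothing$ for $i=1,\dots,s$; a collection is connected if any two of its members are connected by a chain in it; the maximal connected subcollections of $\omega$ are the components of $\omega$. A finite-component cover of a space is a star-finite open cover each of whose components has finitely many elements. For a space $Z$, $\exp Z$ is the set of nonempty closed subsets of $Z$ with the Vietoris topology, whose base consists of the sets $O\langle U_1,\dots,U_n\rangle=\{F\in\exp Z: F\subset\bigcup_{i=1}^n U_i,\ F\cap U_i\neq\varnothing\ (i=1,\dots,n)\}$, $U_i$ nonempty open in $Z$. For a Tychonoff space $X$, $\exp_\beta X=\{F\in\exp\beta X: F\subset X\}$ (the nonempty compact subsets of $X$) with the subspace topology from $\exp\beta X$, where $\beta X$ is the Stone–Čech compactification. *)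

(* Defs.v *)
From Stdlib Require Import Reals List.
Set Implicit Arguments.
Open Scope R_scope.

Definition set (T : Type) := T -> Prop.

Definition meets (T : Type) (A B : set T) : Prop := exists x, A x /\ B x.

Record topology (T : Type) := Topology {
  open : set T -> Prop;
  open_setT : open (fun _ => True);
  open_inter : forall U V, open U -> open V -> open (fun x => U x /\ V x);
  open_bigunion : forall F : set (set T),
      (forall U, F U -> open U) -> open (fun x => exists U, F U /\ U x)
}.

Definition closed (T : Type) (t : topology T) (C : set T) : Prop :=
  open t (fun x => ~ C x).

Definition T1_space (T : Type) (t : topology T) : Prop :=
  forall x y : T, x <> y -> exists U, open t U /\ U x /\ ~ U y.

Definition continuous_real (T : Type) (t : topology T) (f : T -> R) : Prop :=
  forall V : set R,
    (forall y, V y -> exists e, 0 < e /\ forall z, Rabs (z - y) < e -> V z) ->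
    open t (fun x => V (f x)).

Definition tychonoff (T : Type) (t : topology T) : Prop :=
  T1_space t /\
  forall (C : set T) (x : T), closed t C -> ~ C x ->
    exists f : T -> R, continuous_real t f /\ (forall y, 0 <= f y <= 1) /\
      f x = 0 /\ (forall y, C y -> f y = 1).

Definition compact_subset (T : Type) (t : topology T) (F : set T) : Prop :=
  forall (I : Type) (U : I -> set T),
    (forall i, open t (U i)) -> (forall x, F x -> exists i, U i x) ->
    exists l : list I, forall x, F x -> exists i, In i l /\ U i x.

Definition finite_coll (T : Type) (c : set (set T)) : Prop :=
  exists l : list (set T), forall B, c B -> In B l.

Definition star_finite (T : Type) (w : set (set T)) : Prop :=
  forall A, w A -> finite_coll (fun B => w B /\ meets A B).

Inductive chained (T : Type) (w : set (set T)) (A : set T) : set T -> Prop :=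
| chained_refl : w A -> chained w A A
| chained_step : forall B C, chained w A B -> w C -> meets B C -> chained w A C.

Definition component (T : Type) (w : set (set T)) (A : set T) : set (set T) :=
  fun B => chained w A B.

Definition open_cover (T : Type) (op : set T -> Prop) (w : set (set T)) : Prop :=
  (forall U, w U -> op U) /\ (forall x, exists U, w U /\ U x).

Definition finite_component_cover (T : Type) (op : set T -> Prop)
    (w : set (set T)) : Prop :=
  open_cover op w /\ star_finite w /\
  (forall A, w A -> finite_coll (component w A)).

(* points: nonempty compact subsets of X *)
Definition expb (T : Type) (t : topology T) : Type :=
  { F : set T | (exists x, F x) /\ compact_subset t F }.

Definition vietoris_basic (T : Type) (t : topology T) (Us : list (set T))
    : set (expb t) :=
  fun F => (forall x, proj1_sig F x -> exists U, In U Us /\ U x) /\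
           (forall U, In U Us -> exists x, proj1_sig F x /\ U x).

Definition expb_open (T : Type) (t : topology T) (W : set (expb t)) : Prop :=
  forall F, W F -> exists Us : list (set T),
    Us <> nil /\ (forall U, In U Us -> open t U /\ exists x, U x) /\
    vietoris_basic Us F /\ (forall G, vietoris_basic Us G -> W G).

Definition expb_family (T : Type) (t : topology T) (v : set (set T))
    : set (set (expb t)) :=
  fun W => exists Us : list (set T),
    Us <> nil /\ (forall U, In U Us -> v U) /\ W = vietoris_basic Us.

(* Main.v *)
Require Import Defs.
From Stdlib Require Import Reals List.
From Stdlib Require Import Classical FunctionalExtensionality PropExtensionality.
Set Implicit Arguments.

Fixpoint pw {A : Type} (l : list A) : list (list A) :=
  match l with nil => nil :: nil | a :: l => pw l ++ map (cons a) (pw l) end.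

Lemma pw_spec (A : Type) (L Us : list A) :
  exists l', In l' (pw L) /\ forall U, In U l' <-> In U Us /\ In U L.
Proof.
  induction L as [|a L IH]; simpl.
  - exists nil; split; [left; reflexivity|]. intros U; simpl; tauto.
  - destruct IH as [l' [H1 H2]].
    destruct (classic (In a Us)) as [Ha|Ha].
    + exists (a :: l'); split.
      * apply in_or_app; right; apply in_map; exact H1.
      * intros U; simpl; rewrite H2; split.
        -- intros [<-|[? ?]]; auto.
        -- intros [? [<-|?]]; auto.
    + exists l'; split.
      * apply in_or_app; left; exact H1.
      * intros U; rewrite H2; split.
        -- intros [? ?]; auto.
        -- intros [? [<-|?]]; [contradiction|auto].
Qed.

Lemma vb_ext (X : Type) (t : topology X) (l1 l2 : list (set X)) :
  (forall U, In U l1 <-> In U l2) -> vietoris_basic (t:=t) l1 = vietoris_basic l2.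
Proof.
  intros H. extensionality F. apply propositional_extensionality.
  unfold vietoris_basic; split; intros [A B]; split.
  - intros x Hx; destruct (A x Hx) as [U [HU Ux]]; exists U; rewrite <- H; auto.
  - intros U HU; apply B; rewrite H; auto.
  - intros x Hx; destruct (A x Hx) as [U [HU Ux]]; exists U; rewrite H; auto.
  - intros U HU; apply B; rewrite <- H; auto.
Qed.

Lemma finite_vb (X : Type) (t : topology X) (L : list (set X)) :
  exists LL : list (set (expb t)), forall Us,
    (forall U, In U Us -> In U L) -> In (vietoris_basic Us) LL.
Proof.
  exists (map (@vietoris_basic X t) (pw L)).
  intros Us HUs. destruct (pw_spec L Us) as [l' [H1 H2]].
  rewrite (vb_ext t Us l').
  - apply in_map; exact H1.
  - intros U; rewrite H2; split; [auto|tauto].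
Qed.

Lemma gather (X : Type) (Q : set X -> set X -> Prop) (Us : list (set X)) :
  (forall U, In U Us -> exists l, forall B, Q U B -> In B l) ->
  exists L, forall U B, In U Us -> Q U B -> In B L.
Proof.
  induction Us as [|a Us IH]; intros H.
  - exists nil; intros U B [].
  - destruct IH as [L HL]. { intros U HU; apply H; right; exact HU. }
    destruct (H a (or_introl eq_refl)) as [l Hl].
    exists (l ++ L); intros U B [<-|HU] HQ; apply in_or_app; eauto.
Qed.

Lemma vb_meet (X : Type) (t : topology X) (Us Us' : list (set X)) F :
  vietoris_basic (t:=t) Us F -> vietoris_basic Us' F ->
  forall U', In U' Us' -> exists U, In U Us /\ meets U U'.
Proof.
  intros [A _] [_ B] U' HU'. destruct (B U' HU') as [x [Fx Ux]].
  destruct (A x Fx) as [U [HU Ux']]. exists U; split; auto. exists x; auto.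
Qed.

Theorem lemma3 (X : Type) (t : topology X) (v : set (set X)) :
  tychonoff t ->
  finite_component_cover (open t) v ->
  finite_component_cover (@expb_open X t) (@expb_family X t v).
Proof.
  intros _ [[Hop Hcov] [Hsf Hcomp]].
  split; [split|split].
  - intros W [Us [Hne [HUs HW]]]; subst W; intros F HF.
    exists Us; split; [exact Hne|]; split; [|split; [exact HF|auto]].
    intros U HU; split; [apply Hop, HUs, HU|].
    destruct HF as [_ B]. destruct (B U HU) as [x [_ Ux]]; exists x; exact Ux.
  - intros F.
    destruct (proj2_sig F) as [[x0 Fx0] Hc].
    set (I := {U : set X | v U /\ meets (proj1_sig F) U}).
    destruct (Hc I (fun i => proj1_sig i)) as [l Hl].
    + intros [U [HU ?]]; simpl; apply Hop, HU.
    + intros x Fx. destruct (Hcov x) as [U [HU Ux]].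
      unshelve eexists (exist _ U (conj HU _)); [exists x; auto|]. exact Ux.
    + exists (vietoris_basic (map (fun i : I => proj1_sig i) l)); split.
      * exists (map (fun i : I => proj1_sig i) l); split; [|split; [|reflexivity]].
        -- destruct (Hl x0 Fx0) as [i [Hi _]]; destruct l; [destruct Hi|]; discriminate.
        -- intros U HU; apply in_map_iff in HU; destruct HU as [[U0 [HU0 ?]] [<- ?]]; exact HU0.
      * split.
        -- intros x Fx; destruct (Hl x Fx) as [i [Hi Ui]].
           exists (proj1_sig i); split; [apply in_map; exact Hi|exact Ui].
        -- intros U HU; apply in_map_iff in HU; destruct HU as [[U0 [? [x [? ?]]]] [<- ?]].
           exists x; auto.
  - intros W [Us [_ [HUs ->]]].
    destruct (gather (fun U B => v B /\ meets U B) Us) as [L HL].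
    { intros U HU; exact (Hsf U (HUs U HU)). }
    destruct (finite_vb t L) as [LL HLL]. exists LL.
    intros B [[Us' [_ [HUs' ->]]] [F [HF HF']]].
    apply HLL; intros U' HU'.
    destruct (vb_meet HF HF' U' HU') as [U [HU HM]].
    apply (HL U U' HU); split; auto.
  - intros W HW.
    destruct HW as [Us [_ [HUs ->]]].
    assert (Hch : forall B, component (@expb_family X t v) (@vietoris_basic X t Us) B ->
      exists UsB, B = @vietoris_basic X t UsB /\
        forall U', In U' UsB -> exists U, In U Us /\ chained v U U').
    { intros B HB; induction HB as [HA|B C HB IH HC HM].
      - exists Us; split; auto. intros U' HU'; exists U'; split; auto.
        apply chained_refl; auto.
      - destruct IH as [UsB [-> HB']].
        destruct HC as [UsC [_ [HUsC ->]]].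
        exists UsC; split; auto. destruct HM as [F [HF HF']].
        intros U' HU'. destruct (vb_meet HF HF' U' HU') as [U0 [HU0 HM0]].
        destruct (HB' U0 HU0) as [U [HU HcU]].
        exists U; split; auto. eapply chained_step; eauto. }
    destruct (gather (fun U B => chained v U B) Us) as [L HL].
    { intros U HU; exact (Hcomp U (HUs U HU)). }
    destruct (finite_vb t L) as [LL HLL]. exists LL.
    intros B HB. destruct (Hch B HB) as [UsB [-> HB']].
    apply HLL; intros U' HU'. destruct (HB' U' HU') as [U [HU HcU]].
    exact (HL U U' HU HcU).
Qed.
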